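(* Let $G=D_n\times\mathbb Z/2$, $H=D_n\times\{0\}$, and let $c_3\le c_4$ be integers with $c_3\ge2$, $c_4>2$. Suppose $f:T(2,2,c_3,c_4)\to G$ is admissible for cover type III-b, i.e. $f$ is surjective, $f(\gamma_1),f(\gamma_2)$ have order 2, $f(\gamma_3)$ has order $c_3$, $f(\gamma_4)$ has order $c_4$, the second components of $f(\gamma_1),f(\gamma_2)$ are $1$ and those of $f(\gamma_3),f(\gamma_4)$ are $0$. Then $c_3=2$ and $c_4=n$, and up to equivalence there is a unique admissible $f$, given by the Hurwitz vector $((yx,1),(e,1),(y,0),(x,0))$.
   Context: $D_n=\langle x,y\mid x^n=y^2=1,\ yxy^{-1}=x^{-1}\rangle$ with neutral element $e$; $\mathbb Z/2$ is written additively with generator $1$. $T(m_1,\dots,m_r):=\langle\gamma_1,\dots,\gamma_r\mid \gamma_1\cdots\gamma_r=1,\ \gamma_i^{m_i}=1\rangle$. The Hurwitz vector of $f$ is $(f(\gamma_1),\dots,f(\gamma_r))$. The braid group $\mathcal B_r$ acts on Hurwitz vectors by $\sigma_i:(\dots,v_i,v_{i+1},\dots)\mapsto(\dots,v_iv_{i+1}v_i^{-1},v_i,\dots)$, and $\mathrm{Aut}(G)_H$ (automorphisms of $G$ preserving $H$) acts componentwise. Two admissible $f,f'$ are equivalent if their Hurwitz vectors lie in the same $\mathcal B_r\times\mathrm{Aut}(G)_H$-orbit. *)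

(* Defs.v *)
From HB Require Import structures.
From mathcomp Require Import all_boot all_order all_algebra all_fingroup.
Set Implicit Arguments. Unset Strict Implicit. Unset Printing Implicit Defensive.
Import GRing.Theory.

(* An element (k, b, c) stands for (x^k y^b, c) with k in Z/n, b, c in Z/2   *)
(* (booleans, addition = xor).  Relations: x^n = y^2 = 1, y x y^-1 = x^-1,   *)
(* so (x^a y^b)(x^c y^d) = x^(a + (-1)^b c) y^(b+d).                          *)
(* Only meaningful for n > 2 (so that 'Z_n is Z/n); the theorem assumes it.  *)
Definition DZ (n : nat) : Type := ('Z_n * bool * bool)%type.
HB.instance Definition _ (n : nat) := Finite.on (DZ n).

Section DZgroup.
Variable n : nat.
Local Open Scope ring_scope.

Definition dz_mul (g h : DZ n) : DZ n :=
  let: (a1, b1, c1) := g in let: (a2, b2, c2) := h in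
  (a1 + (if b1 then - a2 else a2), b1 (+) b2, c1 (+) c2).
Definition dz_one : DZ n := (0, false, false).
Definition dz_inv (g : DZ n) : DZ n :=
  let: (a, b, c) := g in (if b then a else - a, b, c).

Lemma dz_mulA : associative dz_mul.
Proof.
move=> [[a1 b1] c1] [[a2 b2] c2] [[a3 b3] c3] /=.
rewrite !addbA; congr (_, _, _).
by case: b1; case: b2 => /=; rewrite ?opprD ?opprK addrA.
Qed.

Lemma dz_mul1 : left_id dz_one dz_mul.
Proof. by move=> [[a b] c] /=; rewrite add0r. Qed.

Lemma dz_mulV : left_inverse dz_one dz_inv dz_mul.
Proof.
move=> [[a b] c] /=; rewrite !addbb.
by case: b; rewrite ?subrr ?addNr.
Qed.

HB.instance Definition _ := Finite_isGroup.Build (DZ n) dz_mulA dz_mul1 dz_mulV.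
End DZgroup.

Local Open Scope group_scope.

Definition dx (n : nat) : DZ n := ((1%R : 'Z_n), false, false).
Definition dy (n : nat) : DZ n := ((0%R : 'Z_n), true, false).
Definition dz (n : nat) : DZ n := ((0%R : 'Z_n), false, true).

Definition z2 (n : nat) (g : DZ n) : bool := g.2.

Definition Hsub (n : nat) : {set DZ n} := [set g : DZ n | ~~ z2 g].

(* A homomorphism f : T(m_1,..,m_r) -> G is determined by its Hurwitz vector *)
(* (f(gamma_1),...,f(gamma_r)), which must satisfy v_1 ... v_r = 1 and      *)
(* v_i^(m_i) = 1; f is surjective iff the v_i generate G.                     *)
Section Hurwitz.
Variable gT : finGroupType.

(* sigma_(i+1) (0-based index i): (.., v_i, v_(i+1), ..) |->               *)
(*   (.., v_i v_(i+1) v_i^-1, v_i, ..)                                       *)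
Definition braid (i : nat) (v : seq gT) : seq gT :=
  if i.+1 < size v then
    take i v ++ [:: nth 1 v i * nth 1 v i.+1 * (nth 1 v i)^-1; nth 1 v i]
             ++ drop i.+2 v
  else v.

(* Orbit relation of B_r x Aut(G)_H, with G = [set: gT]: the equivalence    *)
(* relation generated by the braid generators and componentwise action of    *)
(* automorphisms of G preserving H.                                          *)
Inductive hequiv (H : {set gT}) : seq gT -> seq gT -> Prop :=
| hequiv_refl v : hequiv H v v
| hequiv_braid i v : i.+1 < size v -> hequiv H v (braid i v)
| hequiv_aut (a : {perm gT}) v :
    a \in Aut [set: gT] -> a @: H = H -> hequiv H v (map a v)
| hequiv_sym v w : hequiv H v w -> hequiv H w v
| hequiv_trans u v w : hequiv H u v -> hequiv H v w -> hequiv H u w.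
End Hurwitz.

Definition admissible_IIIb (n c3 c4 : nat) (v : seq (DZ n)) : Prop :=
  [/\ size v = 4%N,
      (* f is a homomorphism: gamma_1 gamma_2 gamma_3 gamma_4 = 1 (the       *)
      (* relations gamma_i^(m_i) = 1 follow from the order conditions)      *)
      \prod_(g <- v) g = 1,
      <<[set g in v]>> = [set: DZ n],
      [/\ #[nth 1 v 0] = 2%N, #[nth 1 v 1] = 2%N,
          #[nth 1 v 2] = c3 & #[nth 1 v 3] = c4] &
      [/\ z2 (nth 1 v 0), z2 (nth 1 v 1),
          ~~ z2 (nth 1 v 2) & ~~ z2 (nth 1 v 3)]].

Definition hv_IIIb (n : nat) : seq (DZ n) :=
  [:: dy n * dx n * dz n; dz n; dy n; dx n].
Arguments admissible_IIIb : clear implicits.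
Arguments hv_IIIb : clear implicits.
Arguments Hsub : clear implicits.

(* Main.v *)
Require Import Defs.
From mathcomp Require Import all_boot all_order all_algebra all_fingroup all_solvable.
From mathcomp Require Import ring.
Set Implicit Arguments. Unset Strict Implicit. Unset Printing Implicit Defensive.
Import GRing.Theory.
Local Open Scope group_scope.


Lemma dzM n (a1 a2 : 'Z_n) b1 b2 c1 c2 :
  ((a1, b1, c1) : DZ n) * (a2, b2, c2) = ((a1 + (if b1 then - a2 else a2))%R, b1 (+) b2, c1 (+) c2).
Proof. by []. Qed.
Lemma dz1E n : (1 : DZ n) = (0%R, false, false). Proof. by []. Qed.
Lemma dzVE n (a : 'Z_n) b c : ((a,b,c) : DZ n)^-1 = ((if b then a else -a)%R, b, c).
Proof. by []. Qed.

Lemma dzX n (a : 'Z_n) i : ((a, false, false) : DZ n) ^+ i = ((a *+ i)%R, false, false).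
Proof.
elim: i => [|i IH]; first by rewrite expg0 mulr0n.
by rewrite expgS IH dzM /= mulrS.
Qed.

Lemma ord2 (gT : finGroupType) (g : gT) : g ^+ 2 = 1 -> g != 1 -> #[g] = 2%N.
Proof.
move=> h2 h1.
have d : (#[g] %| 2)%N by rewrite order_dvdn h2.
have g1 : (1 < #[g])%N by rewrite order_gt1.
have := dvdn_leq (isT : (0 < 2)%N) d.
by case: #[g] g1 d => [|[|[|]]].
Qed.

Lemma ord_rot n (k u : 'Z_n) : (2 < n)%N -> (u * k = 1)%R -> #[((k, false, false) : DZ n)] = n.
Proof.
move=> n2 uk; have n1 : (1 < n)%N by apply: ltnW.
apply/eqP; rewrite eqn_dvd; apply/andP; split.
  by rewrite order_dvdn dzX -mulr_natr pchar_Zp // mulr0.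
have := expg_order ((k, false, false) : DZ n); rewrite dzX dz1E => [[]] e.
set m := #[_] in e *.
have : (m%:R : 'Z_n)%R = 0%R.
  by rewrite -(mulr0 u) -e mulrnAr uk.
move/(congr1 val); have := val_Zp_nat n1 m => /= -> /eqP.
by rewrite -/(dvdn n m).
Qed.



Lemma eq2w n (w x y : 'Z_n) : (w + w = 0)%R -> x = (y + (w + w))%R -> x = y.
Proof. by move=> -> ->; rewrite addr0. Qed.
Lemma eq2w' n (w x y : 'Z_n) : (w + w = 0)%R -> x = (y - (w + w))%R -> x = y.
Proof. by move=> -> ->; rewrite subr0. Qed.
Ltac zring Hw := first [ring | (apply: (eq2w Hw); ring) | (apply: (eq2w' Hw); ring)].

Definition Sset n (m w k : 'Z_n) : {set DZ n} :=
  [set g : DZ n | [exists t : 'Z_n,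
     (g.1.1 - (if g.1.2 then m else 0) - (if g.2 then w else 0) == t * k)%R]].

Lemma Sgroup n (m w k : 'Z_n) : (w + w = 0)%R -> group_set (Sset m w k).
Proof.
move=> Hw; apply/group_setP; split.
  by rewrite inE; apply/existsP; exists 0%R; rewrite /= !subr0 mul0r.
move=> [[a1 b1] c1] [[a2 b2] c2]; rewrite !inE /= => /existsP [t1 /eqP e1] /existsP [t2 /eqP e2].
apply/existsP; exists (t1 + (if b1 then - t2 else t2))%R; rewrite /=.
have -> : a1 = (t1 * k + (if b1 then m else 0) + (if c1 then w else 0))%R by rewrite -e1; ring.
have -> : a2 = (t2 * k + (if b2 then m else 0) + (if c2 then w else 0))%R by rewrite -e2; ring.
by clear e1 e2; apply/eqP; case: b1; case: b2; case: c1; case: c2 => /=; zring Hw.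
Qed.

Definition Tset n (b0 : bool) : {set DZ n} := [set g : DZ n | g.1.2 == g.2 && b0].
Lemma Tgroup n b0 : group_set (@Tset n b0).
Proof.
apply/group_setP; split; first by rewrite inE.
move=> [[a1 b1] c1] [[a2 b2] c2]; rewrite !inE /=.
by case: b0; case: b1; case: b2; case: c1; case: c2.
Qed.

Lemma sq_refl n (a : 'Z_n) c : ((a, true, c) : DZ n) ^+ 2 = 1.
Proof. by rewrite expgS expg1 dzM /= subrr addbb. Qed.

Lemma classify n c3 c4 v : (2 < n)%N -> (2 < c4)%N -> admissible_IIIb n c3 c4 v ->
  exists (w m k u : 'Z_n) (b : bool), [/\ (w + w = 0)%R, (u * k = 1)%R &
    v = if b then [:: (m,true,true); (w,false,true); ((m - w + k)%R,true,false); (k,false,false)]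
        else [:: (w,false,true); (m,true,true); ((m - w + k)%R,true,false); (k,false,false)]].
Proof.
move=> n2 c42 [hs hp hg [o1 o2 o3 o4] [z1 z2' z3 z4]].
case: v hs hp hg o1 o2 o3 o4 z1 z2' z3 z4 =>
  [|[[a1 b1] c1] [|[[a2 b2] c2] [|[[a3 b3] c3'] [|[[a4 b4] c4'] [|]]]]] //= _.
rewrite /z2 /=; case: c1; case: c2; case: c3'; case: c4' => // hp hg o1 o2 o3 o4 _ _ _ _.
rewrite !big_cons big_nil mulg1 in hp.
have key : forall S : {group DZ n}, ((a1, b1, true) : DZ n) \in S ->
   ((a2, b2, true) : DZ n) \in S -> ((a4, b4, false) : DZ n) \in S -> [set: DZ n] \subset S.
  move=> S h1 h2 h4; rewrite -hg gen_subG; apply/subsetP => g.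
  rewrite inE !in_cons in_nil orbF => /or4P [] /eqP -> //.
  have : ((a1, b1, true) : DZ n) * (((a2, b2, true) : DZ n) * (((a3, b3, false) : DZ n) * (a4, b4, false))) \in S by rewrite hp group1.
  by rewrite groupMl // groupMl // groupMr.
have b4f : b4 = false.
  apply/negP => hb; move: c42; rewrite -o4 hb.
  have : (#[((a4, true, false) : DZ n)] %| 2)%N by rewrite order_dvdn sq_refl.
  by move/(dvdn_leq (isT : (0 < 2)%N)); case: #[_] => [|[|[|]]].
subst b4.
have hp' := hp; rewrite !dzM dz1E /= in hp'.
move/eqP: hp'; rewrite !xpair_eqE => /andP [/andP [/eqP e hb] _].
destruct b1, b2, b3; try discriminate hb; rewrite ?eqxx in hb; cbv iota beta in e.
- have := key (Group (@Tgroup n true)); rewrite !inE => /(_ isT isT isT) /subsetP.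
  by move/(_ ((0%R, true, false) : DZ n) (in_setT _)); rewrite inE.
-
  have Hw : (a2 + a2 = 0)%R.
    have := expg_order ((a2, false, true) : DZ n); rewrite o2 expgS expg1 dzM dz1E /=.
    by move/eqP; rewrite !xpair_eqE => /andP [/andP [/eqP -> _] _].
  have := key (Group (Sgroup (a1 - a2)%R a4 Hw)).
  rewrite !inE /=.
  have h1 : [exists t, (a1 - (a1 - a2) - a2 == t * a4)%R].
    by apply/existsP; exists 0%R; apply/eqP; ring.
  have h2 : [exists t, (a2 - 0 - a2 == t * a4)%R].
    by apply/existsP; exists 0%R; apply/eqP; ring.
  have h4 : [exists t : 'Z_n, (a4 - 0 - 0 == t * a4)%R].
    by apply/existsP; exists 1%R; apply/eqP; ring.
  move=> /(_ h1 h2 h4) /subsetP /(_ ((1%R, false, false) : DZ n)).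
  rewrite !inE /= => /(_ isT) /existsP [u /eqP hu].
  exists a2, a1, a4, u, true; split => //; first by rewrite -hu; ring.
  congr [:: _; _; (_, _, _); _].
  transitivity (a3 + (a1 + - (a2 + (a3 + - a4))))%R; first by rewrite e addr0.
  zring Hw.
2: { have := key (Group (@Tgroup n false)); rewrite !inE => /(_ isT isT isT) /subsetP.
  by move/(_ ((0%R, true, false) : DZ n) (in_setT _)); rewrite inE. }
- have Hw : (a1 + a1 = 0)%R.
    have := expg_order ((a1, false, true) : DZ n); rewrite o1 expgS expg1 dzM dz1E /=.
    by move/eqP; rewrite !xpair_eqE => /andP [/andP [/eqP -> _] _].
  have := key (Group (Sgroup (a2 - a1)%R a4 Hw)).
  rewrite !inE /=.
  have h1 : [exists t, (a1 - 0 - a1 == t * a4)%R].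
    by apply/existsP; exists 0%R; apply/eqP; ring.
  have h2 : [exists t, (a2 - (a2 - a1) - a1 == t * a4)%R].
    by apply/existsP; exists 0%R; apply/eqP; ring.
  have h4 : [exists t : 'Z_n, (a4 - 0 - 0 == t * a4)%R].
    by apply/existsP; exists 1%R; apply/eqP; ring.
  move=> /(_ h1 h2 h4) /subsetP /(_ ((1%R, false, false) : DZ n)).
  rewrite !inE /= => /(_ isT) /existsP [u /eqP hu].
  exists a1, a2, a4, u, false; split => //; first by rewrite -hu; ring.
  congr [:: _; _; (_, _, _); _].
  transitivity (a3 + (a1 + (a2 + - (a3 + - a4))))%R; first by rewrite e addr0.
  zring Hw.
Qed.




Definition phi n (u j w : 'Z_n) (g : DZ n) : DZ n :=
  let: (a, b, c) := g in
  ((u * a + (if b then j else 0) + (if c then w else 0))%R, b, c).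

Lemma phi_inj n (u' u j w : 'Z_n) : (u' * u = 1)%R -> injective (phi u j w).
Proof.
move=> hu [[a1 b1] c1] [[a2 b2] c2] /eqP; rewrite /phi !xpair_eqE.
case/andP => [/andP [/eqP e /eqP eb] /eqP ec]; subst b2 c2.
move/addIr/addIr: e => e.
by rewrite -(mul1r a1) -(mul1r a2) -hu -!mulrA e.
Qed.

Lemma phi_morph n (u j w : 'Z_n) : (w + w = 0)%R -> {morph phi u j w : x y / x * y}.
Proof.
move=> Hw [[a1 b1] c1] [[a2 b2] c2]; rewrite dzM /phi; cbv iota beta; rewrite dzM.
by case: b1; case: b2; case: c1; case: c2; cbv beta iota delta [addb negb]; congr (_, _, _); zring Hw.
Qed.

Lemma phi_aut n (u' u j w : 'Z_n) (hu : (u' * u = 1)%R) : (w + w = 0)%R ->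
  perm (@phi_inj n u' u j w hu) \in Aut [set: DZ n].
Proof.
move=> Hw; rewrite inE; apply/andP; split.
  by apply/subsetP => x _; exact: in_setT.
by apply/morphicP => x y _ _; rewrite !permE; apply: phi_morph.
Qed.

Lemma phi_H n (u' u j w : 'Z_n) (hu : (u' * u = 1)%R) :
  perm (@phi_inj n u' u j w hu) @: Hsub n = Hsub n.
Proof.
apply/eqP; rewrite eqEcard card_imset ?leqnn ?andbT; last exact: perm_inj.
apply/subsetP => g /imsetP [[[a b] c] hh ->]; rewrite permE.
by move: hh; rewrite !inE /z2 /phi.
Qed.

Lemma hvE n : hv_IIIb n = [:: ((-1)%R, true, true); (0%R, false, true); (0%R, true, false); (1%R, false, false)].
Proof. by rewrite /hv_IIIb /dx /dy /dz !dzM add0r oppr0 addr0. Qed.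

Lemma step n (w m k u : 'Z_n) : (w + w = 0)%R -> (u * k = 1)%R ->
  hequiv (Hsub n) [:: (m,true,true); (w,false,true); ((m - w + k)%R,true,false); (k,false,false)]
    (hv_IIIb n).
Proof.
move=> Hw Huk.
have hk : (k * u = 1)%R by rewrite mulrC.
have Hw' : (- (u * w) + - (u * w) = 0)%R by rewrite -opprD -mulrDr Hw mulr0 oppr0.
set w' := (- (u * w))%R in Hw'.
set j := (-1 - u * m - w')%R.
pose p := perm (@phi_inj n k u j w' hk).
suff e : map p [:: (m,true,true); (w,false,true); ((m - w + k)%R,true,false); (k,false,false)] = hv_IIIb n.
  by rewrite -e; apply: hequiv_aut; [exact: phi_aut | exact: phi_H].
rewrite hvE /p /= !permE /phi; cbv beta iota.
congr [:: (_, _, _); (_, _, _); (_, _, _); (_, _, _)]; rewrite /j /w'.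
- ring.
- ring.
- by rewrite !mulrDr Huk; ring.
- by rewrite Huk; ring.
Qed.




Lemma hv_gen n : (2 < n)%N -> <<[set g in hv_IIIb n]>> = [set: DZ n].
Proof.
move=> n2; apply/eqP; rewrite eqEsubset subsetT /=; apply/subsetP => [[[a b] c]] _.
have hx : ((1%R, false, false) : DZ n) \in <<[set g in hv_IIIb n]>>.
  by apply: mem_gen; rewrite hvE inE !in_cons eqxx !orbT.
have hy : ((0%R, true, false) : DZ n) \in <<[set g in hv_IIIb n]>>.
  by apply: mem_gen; rewrite hvE inE !in_cons eqxx !orbT.
have hz : ((0%R, false, true) : DZ n) \in <<[set g in hv_IIIb n]>>.
  by apply: mem_gen; rewrite hvE inE !in_cons eqxx !orbT.
have -> : ((a, b, c) : DZ n) = ((1%R, false, false) : DZ n) ^+ a *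
    (if b then ((0%R, true, false) : DZ n) else 1) * (if c then ((0%R, false, true) : DZ n) else 1).
  rewrite dzX natr_Zp.
  by case: b; case: c; rewrite ?mulg1 ?dzM; cbv beta iota delta [addb negb]; congr (_, _, _); ring.
by case: b; case: c; rewrite !groupM ?groupX ?group1.
Qed.

Lemma conj_c n (w m : 'Z_n) : (w + w = 0)%R ->
  ((w, false, true) : DZ n) * ((m, true, true) : DZ n) * (((w, false, true) : DZ n)^-1) = ((m, true, true) : DZ n).
Proof.
move=> Hw; rewrite dzVE !dzM; cbv beta iota delta [addb negb]; congr (_, _, _); zring Hw.
Qed.

Lemma refl_ne1 n (a : 'Z_n) c : ((a, true, c) : DZ n) != 1.
Proof. by rewrite dz1E !xpair_eqE andbF. Qed.

Theorem lemma5p14 (n c3 c4 : nat) (f : seq (DZ n)) :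
  (2 < n)%N -> (2 <= c3)%N -> (c3 <= c4)%N -> (2 < c4)%N ->
  admissible_IIIb n c3 c4 f ->
  [/\ c3 = 2%N, c4 = n,
      admissible_IIIb n c3 c4 (hv_IIIb n) &
      forall g : seq (DZ n), admissible_IIIb n c3 c4 g ->
        hequiv (Hsub n) g (hv_IIIb n)].
Proof.
move=> n2 c32 c34 c42 hf.
have [w [m [k [u [b [Hw Huk ev]]]]]] := classify n2 c42 hf.
move: (hf); rewrite /admissible_IIIb => -[_ _ _ [_ _ o3 o4] _].
have c3e : c3 = 2%N.
  by move: ev; case: b => ev; rewrite -o3 ev /=; apply: ord2; rewrite ?sq_refl ?refl_ne1.
have c4e : c4 = n.
  by move: ev; case: b => ev; rewrite -o4 ev /=; apply: (ord_rot n2 Huk).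
split => //.
- rewrite c3e c4e; split.
  + by rewrite hvE.
  + by rewrite hvE !big_cons big_nil mulg1 !dzM dz1E; cbv beta iota delta [addb negb]; congr (_, _, _); ring.
  + exact: hv_gen.
  + rewrite hvE /=; split.
    * by apply: ord2; rewrite ?sq_refl ?refl_ne1.
    * apply: ord2; last by rewrite dz1E !xpair_eqE.
      by rewrite expgS expg1 dzM dz1E addr0.
    * by apply: ord2; rewrite ?sq_refl ?refl_ne1.
    * by apply: (ord_rot n2 (mulr1 1%R)).
  + by rewrite hvE.
- move=> g hg.
  have [w1 [m1 [k1 [u1 [b1 [Hw1 Huk1 ->]]]]]] := classify n2 c42 hg.
  case: b1; first exact: (step m1 Hw1 Huk1).
  set V := [:: _; _; _; _].
  apply: (hequiv_trans (hequiv_braid (Hsub n) (i:=0) (v:=V) isT)).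
  rewrite /braid /V /=.
  rewrite (conj_c m1 Hw1).
  exact: (step m1 Hw1 Huk1).
Qed.
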